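(* Let $k=\mathbb R$ or $\mathbb C$, let $(V,g)$ be an inner product vector space over $k$, let $f\in\operatorname{End}_k(V)$, and let $\mathcal H_f=\{H_i\}_{i\in I}$ be a family of finite-dimensional $f$-invariant subspaces with $V=\bigoplus_{i\in I}H_i$; write $f_i=f|_{H_i}$ and $\widetilde{\mathcal H}_f^\perp=\bigoplus_{i\in I}[\operatorname{Ker} f_i]_i^\perp$. Then $\widetilde{\mathcal H}_f^\perp=[\operatorname{Ker} f]^\perp$ if and only if $[\operatorname{Ker} f_i]_i^\perp\subseteq\big[\sum_{j\ne i}\operatorname{Ker} f_j\big]^\perp$ for every $i\in I$.
   Context: An inner product is linear in the first argument, conjugate-symmetric and positive definite. $V=\bigoplus_{i\in I}H_i$ means the natural map $\bigoplus H_i\to V$ is an isomorphism. For a subspace $W\subseteq V$, $W^\perp=\{v\in V:g(w,v)=0\ \forall w\in W\}$; for a subspace $W\subseteq H_i$, $[W]_i^\perp=\{v\in H_i:g(w,v)=0\ \forall w\in W\}$. *)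

(* Defs.v *)
From HB Require Import structures.
From mathcomp Require Import all_boot all_order all_algebra.
From mathcomp Require Import complex.
From mathcomp Require Import reals.
Set Implicit Arguments. Unset Strict Implicit. Unset Printing Implicit Defensive.
Import Order.TTheory GRing.Theory Num.Theory.
Local Open Scope ring_scope.

(* Subspaces of a (possibly infinite-dimensional) K-vector space V are
   represented as predicates V -> Prop. *)

Section Defs.
Variables (K : numDomainType) (conj : K -> K) (V : lmodType K).

Definition is_inner_product (g : V -> V -> K) : Prop :=
  [/\ (forall (a : K) (u v w : V), g (a *: u + v) w = a * g u w + g v w),
      (forall u v : V, g u v = conj (g v u)) &
      (forall v : V, v != 0 -> 0 < g v v)].

Definition is_subspace (W : V -> Prop) : Prop :=
  W 0 /\ forall (a : K) (u v : V), W u -> W v -> W (a *: u + v).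

Definition finite_dim (W : V -> Prop) : Prop :=
  exists s : seq V, (forall x, x \in s -> W x) /\
    forall v, W v <-> exists c : 'I_(size s) -> K, v = \sum_(k < size s) c k *: s`_k.

Definition invariant (f : V -> V) (W : V -> Prop) : Prop :=
  forall v, W v -> W (f v).

Variable I : eqType.

Definition sum_sub (P : I -> Prop) (S : I -> V -> Prop) : V -> Prop :=
  fun v => exists (r : seq I) (w : I -> V),
    [/\ uniq r, (forall i, i \in r -> P i /\ S i (w i)) & v = \sum_(i <- r) w i].

(* V = (+)_{i in I} H_i : the natural map (+) H_i -> V is an isomorphism,
   i.e. every vector is a finite sum of elements of the H_i (surjectivity),
   and a finite sum of elements of distinct H_i vanishes only if every
   summand vanishes (injectivity). *)
Definition is_direct_sum_decomp (H : I -> V -> Prop) : Prop :=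
  (forall v : V, sum_sub (fun _ => True) H v) /\
  (forall (r : seq I) (w : I -> V), uniq r -> (forall i, i \in r -> H i (w i)) ->
      \sum_(i <- r) w i = 0 -> forall i, i \in r -> w i = 0).

Variable g : V -> V -> K.

Definition perp (W : V -> Prop) : V -> Prop :=
  fun v => forall w, W w -> g w v = 0.

Definition perp_in (Hi : V -> Prop) (W : V -> Prop) : V -> Prop :=
  fun v => Hi v /\ forall w, W w -> g w v = 0.

Definition ker_in (f : V -> V) (Hi : V -> Prop) : V -> Prop :=
  fun v => Hi v /\ f v = 0.

Definition ker (f : V -> V) : V -> Prop := fun v => f v = 0.

End Defs.

Definition lemma3p19_over (K : numDomainType) (conj : K -> K) : Prop :=
  forall (V : lmodType K) (g : V -> V -> K) (f : {linear V -> V})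
         (I : eqType) (H : I -> V -> Prop),
    is_inner_product conj g ->
    (forall i, is_subspace (H i)) ->
    (forall i, finite_dim (H i)) ->
    (forall i, invariant f (H i)) ->
    is_direct_sum_decomp H ->
    (forall v, sum_sub (fun _ => True)
                 (fun i => perp_in g (H i) (ker_in f (H i))) v
               <-> perp g (ker f) v)
    <->
    (forall i v, perp_in g (H i) (ker_in f (H i)) v ->
       perp g (sum_sub (fun j => j <> i) (fun j => ker_in f (H j))) v).

(* Main.v *)
Require Import Defs.
From mathcomp Require Import all_boot all_order all_algebra.
From mathcomp Require Import complex.
From mathcomp Require Import reals.
From Stdlib Require Import Classical ClassicalEpsilon.
Set Implicit Arguments. Unset Strict Implicit. Unset Printing Implicit Defensive.
Import Order.TTheory GRing.Theory Num.Theory.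
Local Open Scope ring_scope.

Section Aux.
Variables (K : numFieldType) (conj : K -> K) (V : lmodType K) (g : V -> V -> K).
Hypothesis gip : is_inner_product conj g.

Lemma gL a u v w : g (a *: u + v) w = a * g u w + g v w.
Proof. by case: gip. Qed.

Lemma gD u v w : g (u + v) w = g u w + g v w.
Proof. by rewrite -[u]scale1r gL mul1r scale1r. Qed.

Lemma g0l w : g 0 w = 0.
Proof.
have h := gD 0 0 w; rewrite addr0 in h.
by rewrite -{1}[g 0 w]addr0 in h; move/addrI: h.
Qed.

Lemma gB u v w : g (u - v) w = g u w - g v w.
Proof. by rewrite -scaleN1r addrC gL mulN1r addrC. Qed.

Lemma conj0 : conj 0 = 0.
Proof. case: gip => _ hc _. by rewrite -(g0l 0) -hc. Qed.

Lemma gflip u v : g u v = 0 -> g v u = 0.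
Proof. case: gip => _ hc _ h. by rewrite hc h conj0. Qed.

Lemma g_sum (I : Type) (r : seq I) (F : I -> V) w :
  g (\sum_(i <- r) F i) w = \sum_(i <- r) g (F i) w.
Proof.
elim: r => [|x r IH]; first by rewrite !big_nil g0l.
by rewrite !big_cons gD IH.
Qed.

Lemma g_sum0_r (I : eqType) (r : seq I) (F : I -> V) w :
  (forall i, i \in r -> g w (F i) = 0) -> g w (\sum_(i <- r) F i) = 0.
Proof.
move=> h; apply: gflip; rewrite g_sum big1_seq // => i /andP[_ ir].
exact: gflip (h i ir).
Qed.

Lemma posdef v : g v v = 0 -> v = 0.
Proof.
case: gip => _ _ hp h; apply/eqP; apply: contraT => nz.
by have := hp v nz; rewrite h ltxx.
Qed.

Fixpoint spanP (t : seq V) (v : V) : Prop :=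
  match t with [::] => v = 0 | x :: t' => exists c, spanP t' (v - c *: x) end.

Lemma span0 t : spanP t 0.
Proof. elim: t => [|x t IH] //=; exists 0; by rewrite scale0r subr0. Qed.

Lemma spanLC t a u v : spanP t u -> spanP t v -> spanP t (a *: u + v).
Proof.
elim: t u v => [|x t IH] u v /=; first by move=> -> ->; rewrite scaler0 addr0.
move=> [cu hu] [cv hv]; exists (a * cu + cv).
have -> : a *: u + v - (a * cu + cv) *: x = a *: (u - cu *: x) + (v - cv *: x).
  rewrite scalerBr scalerDl scalerA opprD !addrA; congr (_ - _).
  by rewrite addrAC.
exact: IH.
Qed.

Lemma spanD t u v : spanP t u -> spanP t v -> spanP t (u + v).
Proof. by move=> hu hv; rewrite -[u]scale1r; apply: spanLC. Qed.

Lemma spanZ t a u : spanP t u -> spanP t (a *: u).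
Proof. by move=> hu; rewrite -[_ *: u]addr0; apply: spanLC => //; apply: span0. Qed.

Lemma span_mem t x : x \in t -> spanP t x.
Proof.
elim: t => [|y t IH] //=; rewrite inE => /orP[/eqP -> | xt].
  by exists 1; rewrite scale1r subrr; apply: span0.
by exists 0; rewrite scale0r subr0; apply: IH.
Qed.

Lemma span_sum s (c : 'I_(size s) -> K) :
  spanP s (\sum_(k < size s) c k *: s`_k).
Proof.
elim/big_ind: _ => [|u v|k _]; first exact: span0.
  exact: spanD.
apply: spanZ; apply: span_mem; exact: mem_nth.
Qed.

Lemma span_in_sub (W : V -> Prop) t v :
  is_subspace W -> (forall x, x \in t -> W x) -> spanP t v -> W v.
Proof.
move=> [W0 WL]; elim: t v => [|x t IH] v ht /=; first by move=> ->.
move=> [c hc].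
have -> : v = c *: x + (v - c *: x) by rewrite addrC subrK.
apply: WL; first by apply: ht; rewrite inE eqxx.
apply: IH => // y yt; apply: ht; by rewrite inE yt orbT.
Qed.

Lemma basis_lemma s (W : V -> Prop) :
  is_subspace W -> (forall v, W v -> spanP s v) ->
  exists t, (forall x, x \in t -> W x) /\ (forall v, W v -> spanP t v).
Proof.
elim: s W => [|x s IH] W [W0 WL] Ws.
  by exists [::]; split => // v /Ws.
pose W' := fun v => W v /\ spanP s v.
have sW' : is_subspace W'.
  split; first by split => //; apply: span0.
  move=> a u v [Wu su] [Wv sv]; split; [exact: WL | exact: spanLC].
have W's : forall v, W' v -> spanP s v by move=> v [].
case: (IH W' sW' W's) => t' [t'W Wt'].
case: (classic (exists w0, W w0 /\ ~ spanP s w0)) => [[w0 [Ww0 nsw0]] | nex].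
  exists (w0 :: t'); split.
    move=> y; rewrite inE => /orP[/eqP -> // | yt]; exact: (t'W y yt).1.
  move=> v Wv /=.
  case: (Ws v Wv) => c hc; case: (Ws w0 Ww0) => b hb.
  have bnz : b != 0.
    apply/eqP => b0; apply: nsw0; by rewrite b0 scale0r subr0 in hb.
  exists (c / b); apply: Wt'; split.
    rewrite -scaleNr addrC; exact: WL.
  have -> : v - c / b *: w0 = (- (c / b)) *: (w0 - b *: x) + (v - c *: x).
    rewrite scalerBr !scaleNr opprK scalerA divfK //.
    by rewrite -addrA [c *: x + _]addrCA subrr addr0 addrC.
  exact: spanLC.
exists t'; split; first by move=> y yt; exact: (t'W y yt).1.
move=> v Wv; apply: Wt'; split => //.
apply: NNPP => nsv; apply: nex; by exists v.
Qed.

Lemma proj_lemma t v :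
  exists k, spanP t k /\ forall w, spanP t w -> g w (v - k) = 0.
Proof.
elim: t v => [|x t IH] v.
  by exists 0; split => // w /= ->; rewrite g0l.
case: (IH x) => kx [skx hx].
case: (IH v) => kv [skv hv].
set x' := x - kx.
case: (eqVneq x' 0) => [x0 | xnz].
  exists kv; split; first by exists 0; rewrite scale0r subr0.
  move=> w [c hc]; apply: hv.
  have -> : w = (w - c *: x) + c *: kx.
    by move/eqP: x0; rewrite subr_eq0 => /eqP ->; rewrite subrK.
  by rewrite addrC; apply: spanLC.
set u := v - kv.
pose a := g u x' / g x' x'.
have gxx : g x' x' != 0.
  case: gip => _ _ hp; by have := hp x' xnz; rewrite lt0r => /andP[].
exists (kv + a *: x'); split.
  exists a.
  have -> : kv + a *: x' - a *: x = (- a) *: kx + kv.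
    by rewrite /x' scalerBr addrCA [a *: x + _]addrC addrK scaleNr addrC.
  exact: spanLC.
have ev : v - (kv + a *: x') = u - a *: x' by rewrite opprD addrA.
rewrite ev.
have hux : g (u - a *: x') x' = 0.
  by rewrite gB -[_ *: x']addr0 gL g0l addr0 /a divfK // subrr.
move=> w [c hc].
have -> : w = c *: x' + (c *: kx + (w - c *: x)).
  by rewrite /x' scalerBr addrA subrK addrC subrK.
rewrite gL (gflip hux) mulr0 add0r.
set y := _ + _.
have sy : spanP t y by apply: spanLC.
apply: gflip; rewrite gB -[_ *: x']addr0 gL g0l addr0.
rewrite (gflip (hv y sy)) (gflip (hx y sy)) mulr0 subr0 //.
Qed.

End Aux.

Lemma main (K : numFieldType) (conj : K -> K) : lemma3p19_over conj.
Proof.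
move=> V g f I H gip Hsub Hfin Hinv [Hsurj Hinj].
have kerdec : forall w, f w = 0 -> exists r wf,
    [/\ uniq r, forall i, i \in r -> ker_in f (H i) (wf i) & w = \sum_(i <- r) wf i].
  move=> w fw0; case: (Hsurj w) => r [wf [ur Hr wE]].
  exists r, wf; split => // i ir; split; first exact: (Hr i ir).2.
  apply: (Hinj r (fun i => f (wf i))) => //.
    move=> j jr; apply: Hinv; exact: (Hr j jr).2.
  by rewrite -raddf_sum -wE.
split.
  move=> E i v Pv w [r [wf [ur Hr ->]]].
  have : perp g (ker f) v.
    apply/E; exists [:: i], (fun _ => v); split => //.
      by move=> j; rewrite inE => /eqP ->.
    by rewrite big_seq1.
  apply; rewrite /ker raddf_sum big1_seq // => j /andP[_ jr]; exact: (Hr j jr).2.2.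
move=> C.
have fwd : forall v, sum_sub (fun _ => True)
                 (fun i => perp_in g (H i) (ker_in f (H i))) v -> perp g (ker f) v.
  move=> v [r [p [ur Hr ->]]] w fw0.
  case: (kerdec w fw0) => r' [wf [ur' Hr' ->]].
  apply: (g_sum0_r gip) => i ir; rewrite (g_sum gip) big1_seq // => j /andP[_ jr'].
  case: (eqVneq j i) jr' => [-> jr' | jni jr'].
    exact: (Hr i ir).2.2 (wf i) (Hr' i jr').
  apply: (C i (p i) (Hr i ir).2); exists [:: j], wf; split => //.
    move=> l; rewrite inE => /eqP ->; split; [exact/eqP | exact: Hr' j jr'].
  by rewrite big_seq1.
move=> v; split; first exact: fwd.
move=> Pv; case: (Hsurj v) => r [vv [ur Hr vE]].
have proj : forall i, exists k, ker_in f (H i) k /\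
    forall w, ker_in f (H i) w -> g w (vv i - k) = 0.
  move=> i; case: (Hfin i) => s [_ Hs].
  have sub : is_subspace (ker_in f (H i)).
    split; first by split; [exact: (Hsub i).1 | exact: raddf0].
    move=> a u w [Hu fu] [Hw fw]; split; first exact: (Hsub i).2.
    by rewrite linearP fu fw scaler0 addr0.
  have inS : forall w, ker_in f (H i) w -> spanP s w.
    move=> w [Hw _]; case: ((Hs w).1 Hw) => c ->; exact: span_sum.
  case: (basis_lemma sub inS) => t [tW Wt].
  case: (proj_lemma gip t (vv i)) => k [kt kperp].
  exists k; split; first exact: (span_in_sub sub tW kt).
  by move=> w Kw; apply: kperp; apply: Wt.
pose k i := proj1_sig (constructive_indefinite_description _ (proj i)).
have kP : forall i, ker_in f (H i) (k i) /\
    forall w, ker_in f (H i) w -> g w (vv i - k i) = 0.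
  by move=> i; exact: (proj2_sig (constructive_indefinite_description _ (proj i))).
pose p i := vv i - k i.
have Tp : sum_sub (fun _ => True)
                 (fun i => perp_in g (H i) (ker_in f (H i))) (\sum_(i <- r) p i).
  exists r, p; split => // i ir; split => //; split; last exact: (kP i).2.
  rewrite /p -scaleN1r addrC; apply: (Hsub i).2; [exact: (kP i).1.1 | exact: (Hr i ir).2].
have kk : f (\sum_(i <- r) k i) = 0.
  by rewrite raddf_sum big1 // => i _; exact: (kP i).1.2.
have sumE : \sum_(i <- r) p i = v - \sum_(i <- r) k i by rewrite /p sumrB vE.
have pperp := fwd _ Tp.
have K0 : \sum_(i <- r) k i = 0.
  apply: (posdef gip).
  have E : \sum_(i <- r) k i = v - \sum_(i <- r) p i by rewrite sumE opprB addrC subrK.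
  have h : g (\sum_(i <- r) k i) (v - \sum_(i <- r) p i) = 0.
    apply: (gflip gip (u := v - \sum_(i <- r) p i)); rewrite (gB gip).
    have h1 : g v (\sum_(i <- r) k i) = 0 by apply: gflip gip _ _ _; exact: Pv.
    have h2 : g (\sum_(i <- r) p i) (\sum_(i <- r) k i) = 0 by apply: gflip gip _ _ _; exact: pperp.
    by rewrite h1 h2 subrr.
  by rewrite -E in h.
by rewrite sumE K0 subr0 in Tp.
Qed.

Theorem lemma3p19 :
  (forall R : realType, lemma3p19_over (fun x : R => x)) /\
  (forall R : realType, lemma3p19_over (fun z : R[i] => Num.conj z)).
Proof.
split => R; exact: main.
Qed.
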